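(* If $X$ is a minimal dendric shift over $\mathcal{A}$ that is planar for the pair of total orders $(\le^L,\le^R)$, then $G^L(X)=G(\le^L)$ and $G^R(X)=G(\le^R)$.
   Context: Shift spaces over a finite alphabet $\mathcal{A}$: nonempty closed shift-invariant $X\subseteq\mathcal{A}^{\mathbb{Z}}$, language $\mathcal{L}(X)$ containing all letters, $\mathcal{L}_n(X)$ its words of length $n$; minimal if no nonempty proper closed invariant subset. $E^L_X(w)=\{a:aw\in\mathcal{L}(X)\}$, $E^R_X(w)=\{b:wb\in\mathcal{L}(X)\}$, $E_X(w)=\{(a,b):awb\in\mathcal{L}(X)\}$; $\mathcal{E}_X(w)$ bipartite graph on disjoint copies of $E^L_X(w),E^R_X(w)$ with edges $E_X(w)$; $X$ dendric if every $\mathcal{E}_X(w)$ is a tree. $X$ is planar for $(\le^L,\le^R)$ if for every $w\in\mathcal{L}(X)$ and all $(a_1,b_1),(a_2,b_2)\in E_X(w)$, $a_1<^La_2$ implies $b_1\le^Rb_2$. Multi-clique $G(\{C_1,\dots,C_k\})$ on $\mathcal{A}$: every pair of distinct elements of $C_i$ joined by an edge of color $c_i$, colors distinct; colored multigraphs identified up to bijection of colors. For a dendric (or eventually dendric) shift there is $N$ such that for $n\ge N$ the multi-clique built from the family $(E^L_X(v))_{v\in\mathcal{L}_n(X)}$ does not depend on $n$; this is $G^L(X)$; $G^R(X)$ is defined likewise from right extensions. For a total order $\le$ with $c_1<c_2<\dots<c_n$ the letters of $\mathcal{A}$, $G(\le)$ is the graph on $\mathcal{A}$ whose edges are $\{c_i,c_{i+1}\}$,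 $i<n$, each with its own color. *)

(* Defs.v *)
From mathcomp Require Import all_boot all_order all_algebra.
From mathcomp Require Import boolp.
Set Implicit Arguments. Unset Strict Implicit. Unset Printing Implicit Defensive.
Import Order.TTheory GRing.Theory Num.Theory.

Section Shifts.
Variable A : finType.

Definition shiftmap (x : int -> A) : int -> A := fun i => x (i + 1)%R.

Definition window (x : int -> A) (i : int) (n : nat) : seq A :=
  [seq x (i + k%:Z)%R | k <- iota 0 n].

(* X is closed in the product topology: any point all of whose central
   blocks x_[-n,n] agree with some point of X belongs to X *)
Definition closed_shift (X : (int -> A) -> Prop) : Prop :=
  forall x, (forall n : nat, exists y, X y /\
                forall i : int, (- n%:Z <= i <= n%:Z)%R -> x i = y i) -> X x.

Definition shift_invariant (X : (int -> A) -> Prop) : Prop :=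
  forall x, X x <-> X (shiftmap x).

Definition subshift (X : (int -> A) -> Prop) : Prop :=
  (exists x, X x) /\ closed_shift X /\ shift_invariant X.

Definition minimal_shift (X : (int -> A) -> Prop) : Prop :=
  subshift X /\
  forall Y, subshift Y -> (forall x, Y x -> X x) -> forall x, X x -> Y x.

Definition inL (X : (int -> A) -> Prop) (w : seq A) : bool :=
  `[< exists x, X x /\ exists i, w = window x i (size w) >].

Definition EL X (w : seq A) : {set A} := [set a | inL X (a :: w)].
Definition ER X (w : seq A) : {set A} := [set b | inL X (rcons w b)].
Definition E2 X (w : seq A) : {set A * A} :=
  [set ab | inL X (ab.1 :: rcons w ab.2)].

Definition ext_vertices X w : {set A + A} :=
  [set inl a | a in EL X w] :|: [set inr b | b in ER X w].

Definition ext_edge X w : rel (A + A) := fun u v =>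
  match u, v with
  | inl a, inr b => (a, b) \in E2 X w
  | inr b, inl a => (a, b) \in E2 X w
  | _, _ => false
  end.

Definition is_tree (T : finType) (V : {set T}) (e : rel T) : Prop :=
  V != set0 /\
  (forall u v, u \in V -> v \in V -> connect e u v) /\
  (forall p : seq T, {subset p <= V} -> uniq p -> 2 < size p -> ~~ cycle e p).

Definition dendric X : Prop :=
  forall w, inL X w -> is_tree (ext_vertices X w) (ext_edge X w).

Definition total_order (le : rel A) : Prop :=
  reflexive le /\ antisymmetric le /\ transitive le /\ total le.

Definition planar X (leL leR : rel A) : Prop :=
  forall w, inL X w -> forall a1 b1 a2 b2,
    (a1, b1) \in E2 X w -> (a2, b2) \in E2 X w ->
    (a1 != a2) && leL a1 a2 -> leR b1 b2.

(* Colored multigraphs on A: a finite list of color classes, the i-th entry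
   being the set of (unordered) edges, i.e. 2-subsets of A, of color i. *)
Definition colored_multigraph := seq {set {set A}}.

(* identification up to a bijection of the colors (colors carrying no edge
   are not part of the graph) *)
Definition cmg_iso (G1 G2 : colored_multigraph) : Prop :=
  perm_eq [seq E <- G1 | E != set0] [seq E <- G2 | E != set0].

Definition clique_edges (C : {set A}) : {set {set A}} :=
  [set [set x; y] | x in C, y in C & x != y].

Definition multi_clique (F : seq {set A}) : colored_multigraph :=
  map clique_edges F.

Definition Ln X (n : nat) : seq (n.-tuple A) :=
  enum (fun t : n.-tuple A => inL X t).

Definition GLn X n : colored_multigraph :=
  multi_clique [seq EL X (tval t) | t <- Ln X n].
Definition GRn X n : colored_multigraph :=
  multi_clique [seq ER X (tval t) | t <- Ln X n].

Definition G_order (le : rel A) : colored_multigraph :=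
  let s := sort le (enum A) in
  [seq [set [set p.1; p.2]] | p <- zip s (behead s)].

End Shifts.

(* Main.v *)
Require Import Defs.
From mathcomp Require Import all_boot all_order all_algebra.
From mathcomp Require Import boolp.
From mathcomp Require Import zify.
Set Implicit Arguments. Unset Strict Implicit. Unset Printing Implicit Defensive.

Record LOK (A : finType) (L : seq A -> bool) (leL leR : rel A) : Prop := {
  lok_fl : forall a w, L (a :: w) -> L w;
  lok_fr : forall w b, L (rcons w b) -> L w;
  lok_el : forall w, L w -> exists a, L (a :: w);
  lok_er : forall w, L w -> exists b, L (rcons w b);
  lok_let : forall a, L [:: a];
  lok_conn : forall w, L w -> forall p : A + A -> bool,
     (forall a b, L (a :: rcons w b) -> p (inl a) = p (inr b)) ->
     (forall a a', L (a :: w) -> L (a' :: w) -> p (inl a) = p (inl a')) /\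
     (forall b b', L (rcons w b) -> L (rcons w b') -> p (inr b) = p (inr b'));
  lok_pl : forall w a1 b1 a2 b2, L (a1 :: rcons w b1) -> L (a2 :: rcons w b2) ->
     a1 != a2 -> leL a1 a2 -> leR b1 b2;
  lok_ur : forall b, exists N, forall w, L w -> N <= size w -> b \in w }.


Lemma zip_behead (T : Type) (x0 : T) (s : seq T) :
  zip s (behead s) = [seq (nth x0 s j, nth x0 s j.+1) | j <- iota 0 (size s).-1].
Proof.
elim: s => [//|x t IH]; case: t IH => [//|y t] IH /=.
congr cons; rewrite IH /= -[1]addn0 iotaDl -map_comp.
by apply: eq_map => j.
Qed.

Lemma clique_pair (A : finType) (x y : A) : x != y -> clique_edges [set x; y] = [set [set x; y]].
Proof.
move=> nxy; apply/setP => E; rewrite inE /clique_edges.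
apply/imset2P/eqP => [[u v]|->].
  rewrite !inE => /orP [] /eqP -> /andP [/orP [] /eqP -> ]; rewrite ?eqxx // => _ ->.
  by rewrite setUC.
by exists x y; rewrite // !inE eqxx ?orbT.
Qed.

Lemma clique_ne0 (A : finType) (S : {set A}) : clique_edges S != set0 ->
  exists x y, [/\ x \in S, y \in S & x != y].
Proof.
case/set0Pn => E /imset2P [u v uS]; rewrite inE => /andP [vS nuv] _.
by exists u, v.
Qed.

Section Core.
Variables (A : finType) (a0 : A) (L : seq A -> bool) (leL leR : rel A).
Hypothesis HL : LOK L leL leR.
Hypothesis HtL : total_order leL.
Hypothesis HtR : total_order leR.

Let s := sort leL (enum A).
Let k := size s.
Definition idx (a : A) := index a s.
Definition sv i := nth a0 s i.

Lemma s_uniq : uniq s.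
Proof. by rewrite sort_uniq enum_uniq. Qed.
Lemma mem_s a : a \in s.
Proof. by rewrite mem_sort mem_enum. Qed.
Lemma idx_lt a : idx a < k.
Proof. by rewrite /idx index_mem mem_s. Qed.
Lemma sv_idx a : sv (idx a) = a.
Proof. by rewrite /sv /idx nth_index // mem_s. Qed.
Lemma idx_sv i : i < k -> idx (sv i) = i.
Proof. by move=> ik; rewrite /idx /sv index_uniq // s_uniq. Qed.
Lemma idx_inj a b : idx a = idx b -> a = b.
Proof. by move=> e; rewrite -(sv_idx a) e sv_idx. Qed.

Lemma leL_idx a b : leL a b = (idx a <= idx b).
Proof.
case: HtL => rf [an [tr tot]].
have so : sorted leL s by apply: sort_sorted.
apply/idP/idP => [lab|].
  rewrite leqNgt; apply/negP => lt.
  have lba : leL b a by apply: (sorted_leq_index tr rf so) => //; [exact: mem_s|exact: mem_s|exact: ltnW].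
  have eab : a = b by apply: an; rewrite lab lba.
  by move: lt; rewrite eab ltnn.
by apply: (sorted_leq_index tr rf so); exact: mem_s.
Qed.

Lemma pl_idx w a1 b1 a2 b2 : L (a1 :: rcons w b1) -> L (a2 :: rcons w b2) ->
  b1 != b2 -> leR b1 b2 -> idx a1 <= idx a2.
Proof.
move=> h1 h2 nb lb; rewrite leqNgt; apply/negP => lt.
have na : a2 != a1 by apply/eqP => e; move: lt; rewrite e ltnn.
have l21 : leL a2 a1 by rewrite leL_idx ltnW.
have := lok_pl HL h2 h1 na l21 => lb2.
case: HtR => _ [an _].
by move/negP: nb; apply; apply/eqP; apply: an; rewrite lb lb2.
Qed.

Definition ELc w : {set A} := [set a | L (a :: w)].

Lemma EL_rcons w b a : a \in ELc (rcons w b) -> a \in ELc w.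
Proof. rewrite !inE => h; apply: (lok_fr HL (b := b)); by rewrite rcons_cons. Qed.

Lemma L_prefix u v : L (u ++ v) -> L u.
Proof.
elim/last_ind: v => [|v b IH]; first by rewrite cats0.
by rewrite -rcons_cat => /(lok_fr HL) /IH.
Qed.
Lemma L_suffix u v : L (u ++ v) -> L v.
Proof. by elim: u => [//|a u IH] /= /(lok_fl HL) /IH. Qed.

Definition intv (S : {set A}) := forall x y z, idx x <= idx y <= idx z ->
  x \in S -> z \in S -> y \in S.

Lemma intv_EL w : intv (ELc w).
Proof.
elim/last_ind: w => [|w b IH].
  by move=> x y z _ _ _; rewrite inE (lok_let HL).
move=> x y z /andP[xy yz] xS zS.
have yw : y \in ELc w by apply: (IH x y z); rewrite ?xy ?yz //; apply: EL_rcons; eassumption.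
move: (yw); rewrite inE => /(lok_er HL) [e]; rewrite rcons_cons => he.
have [eb|neb] := eqVneq e b; first by rewrite inE -eb.
case: HtR => _ [_ [_ tot]].
move: xS zS; rewrite !inE => xS zS.
case/orP: (tot b e) => le.
  have : idx z <= idx y by apply: (pl_idx zS he) => //; rewrite eq_sym.
  by move=> zy; have -> : y = z by apply: idx_inj; apply/eqP; rewrite eqn_leq yz zy.
have : idx y <= idx x by apply: (pl_idx he xS).
by move=> yx; have -> : y = x by apply: idx_inj; apply/eqP; rewrite eqn_leq yx xy.
Qed.

Definition cover w i := (sv i \in ELc w) && (sv i.+1 \in ELc w).

Lemma L_of_EL w a : a \in ELc w -> L w.
Proof. by rewrite inE => h; exact: (lok_fl HL h). Qed.

Lemma cover_ex n i : i.+1 < k -> exists w, size w = n /\ cover w i.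
Proof.
move=> ik; elim: n => [|n [w [sw cw]]].
  by exists [::]; split => //; rewrite /cover !inE !(lok_let HL).
have Lw : L w by move/andP: cw => [/L_of_EL].
apply: contrapT => hn.
have nc : forall e, ~~ cover (rcons w e) i.
  move=> e; apply/negP => ce; apply: hn; exists (rcons w e); split => //.
  by rewrite size_rcons sw.
pose p (u : A + A) := match u with
  | inl a => idx a <= i
  | inr e => [exists a, (a \in ELc (rcons w e)) && (idx a <= i)] end.
have ed : forall a b, L (a :: rcons w b) -> p (inl a) = p (inr b).
  move=> a b h /=.
  have [ai|ai] := leqP (idx a) i.
    by symmetry; apply/fintype.existsP; exists a; rewrite inE h ai.
  symmetry; apply/negbTE/negP => /fintype.existsP [a' /andP [a'S a'i]].
  move/negP: (nc b); apply; apply/andP; split.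
    apply: (intv_EL (w := rcons w b) (x := a') (y := sv i) (z := a)) => //; last by rewrite inE.
    by rewrite idx_sv ?a'i ?(ltnW ai) // ltnW.
  apply: (intv_EL (w := rcons w b) (x := a') (y := sv i.+1) (z := a)) => //; last by rewrite inE.
  by rewrite idx_sv // ai (leq_trans a'i).
have [h1 _] := lok_conn HL Lw ed.
move/andP: cw => [c1 c2]; rewrite !inE in c1 c2.
by have := h1 _ _ c1 c2; rewrite /= (idx_sv (ltnW ik)) (idx_sv ik) leqnn ltnn.

Qed.

Lemma cover_rcons w b i : cover (rcons w b) i -> cover w i.
Proof. by case/andP => /EL_rcons h1 /EL_rcons h2; rewrite /cover h1 h2. Qed.


Lemma cover_uniq w1 w2 i : i.+1 < k -> size w1 = size w2 ->
  cover w1 i -> cover w2 i -> w1 = w2.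
Proof.
move=> ik; elim/last_ind: w1 w2 => [|w1 b1 IH] w2.
  by case: w2.
case/lastP: w2 => [|w2 b2]; first by rewrite size_rcons.
rewrite !size_rcons => /eqP; rewrite eqSS => /eqP sz c1 c2.
have e := IH _ sz (cover_rcons c1) (cover_rcons c2); subst w2.
congr rcons; apply/eqP; apply: contraT => nb.
move/andP: c1 => [x1 y1]; move/andP: c2 => [x2 y2]; rewrite !inE in x1 y1 x2 y2.
case: HtR => _ [_ [_ tot]].
have e1 := idx_sv (ltnW ik); have e2 := idx_sv ik.
case/orP: (tot b1 b2) => le.
  by have := pl_idx y1 x2 nb le; rewrite e1 e2 ltnn.
by have := pl_idx y2 x1 _ le; rewrite eq_sym => /(_ nb); rewrite e1 e2 ltnn.
Qed.


Lemma big3 w : 2 < #|ELc w| -> exists i,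
  [/\ i.+2 < k, sv i \in ELc w, sv i.+1 \in ELc w & sv i.+2 \in ELc w].
Proof.
move=> /card_gt2P [x [y [z [[xS yS zS] [nxy nyz nzx]]]]].
have [m mS mmin] := @arg_minnP _ x (fun a => a \in ELc w) idx xS.
have [M MS Mmax] := @arg_maxnP _ x (fun a => a \in ELc w) idx xS.
have dxy : idx x != idx y by apply: contra nxy => /eqP /idx_inj ->.
have dyz : idx y != idx z by apply: contra nyz => /eqP /idx_inj ->.
have dzx : idx z != idx x by apply: contra nzx => /eqP /idx_inj ->.
have h1 := mmin _ xS; have h2 := mmin _ yS; have h3 := mmin _ zS.
have h4 := Mmax _ xS; have h5 := Mmax _ yS; have h6 := Mmax _ zS.
have hM := idx_lt M.
have le2 : idx m + 2 <= idx M by lia.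
exists (idx m).
have k1 : (idx m).+1 < k by lia.
have k2 : (idx m).+2 < k by lia.
split => //; first by rewrite sv_idx.
  apply: (intv_EL (x := m) (z := M)) => //; rewrite idx_sv //; lia.
apply: (intv_EL (x := m) (z := M)) => //; rewrite idx_sv //; lia.
Qed.

Definition Q i n := exists w, size w = n /\
  [/\ sv i \in ELc w, sv i.+1 \in ELc w & sv i.+2 \in ELc w].

Lemma Q_down i n m : n <= m -> Q i m -> Q i n.
Proof.
move=> nm; elim: m nm => [|m IH]; first by rewrite leqn0 => /eqP ->.
rewrite leq_eqVlt => /orP [/eqP -> //|nm] hq; apply: IH => //.
case: hq => w [sw [h1 h2 h3]].
case/lastP: w sw h1 h2 h3 => [//|w b]; rewrite size_rcons => /eqP; rewrite eqSS => /eqP sw h1 h2 h3.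
by exists w; split => //; split; apply: EL_rcons; eassumption.
Qed.

Lemma fin_bound (P : nat -> nat -> Prop) K :
  (forall i n m, n <= m -> P i n -> P i m) ->
  (forall i, i < K -> exists n, P i n) -> exists N, forall i, i < K -> P i N.
Proof.
move=> up; elim: K => [|K IH] h; first by exists 0.
have [N1 h1] : exists N, forall i, i < K -> P i N.
  by apply: IH => i iK; apply: h; apply: ltnW.
have [N2 h2] := h K (ltnSn K).
exists (maxn N1 N2) => i; rewrite ltnS leq_eqVlt => /orP [/eqP ->|iK].
  by apply: up h2; apply: leq_maxr.
by apply: up (h1 _ iK); apply: leq_maxl.
Qed.

Lemma eventually :
  (exists i, i.+2 < k /\ forall n, Q i n) \/
  (exists N, forall n w, N <= n -> size w = n -> #|ELc w| <= 2).
Proof.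
case: (pselect (exists i, i.+2 < k /\ forall n, Q i n)) => [h|h]; first by left.
right.
have [N hN] : exists N, forall i, i < k -> (i.+2 < k -> ~ Q i N).
  apply: fin_bound.
    by move=> i n m nm hP ik hq; apply: (hP ik); apply: Q_down hq.
  move=> i _; case: (pselect (forall n, Q i n)) => hq.
    by exists 0 => ik _; apply: h; exists i.
  by move/existsNP: hq => [n hn]; exists n.
exists N => n w Nn sw; rewrite leqNgt; apply/negP => /big3 [i [ik h1 h2 h3]].
apply: (hN i) => //; first by apply: leq_trans ik; apply: leqW; apply: leqW.
by apply: (Q_down Nn); exists w.
Qed.


Lemma EL_take m w a : a \in ELc w -> a \in ELc (take m w).
Proof.
rewrite !inE => h; apply: (@L_prefix _ (drop m w)).
by rewrite cat_cons cat_take_drop.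
Qed.

Lemma mkseqD (f : nat -> A) n1 n2 :
  mkseq f (n1 + n2) = mkseq f n1 ++ mkseq (fun j => f (n1 + j)) n2.
Proof.
rewrite /mkseq iotaD map_cat add0n; congr (_ ++ _).
by rewrite -[n1 in iota n1 _]addn0 iotaDl -map_comp.
Qed.

Lemma ext_left n w : L w -> exists x, size x = n /\ L (x ++ w).
Proof.
move=> hw; elim: n => [|n [x [sx hx]]]; first by exists [::].
have [a ha] := lok_el HL hx.
by exists (a :: x); rewrite /= sx.
Qed.

Lemma no_inf i : i.+2 < k -> (forall n, Q i n) -> False.
Proof.
move=> ik hQ.
pose W n := proj1_sig (cid (hQ n)).
have WP n : size (W n) = n /\
   [/\ sv i \in ELc (W n), sv i.+1 \in ELc (W n) & sv i.+2 \in ELc (W n)].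
  exact: (proj2_sig (cid (hQ n))).
have ik1 : i.+1 < k by apply: ltnW.
have Wtake m n : m <= n -> take m (W n) = W m.
  move=> mn; have [s1 [h1 h2 h3]] := WP n; have [s2 [g1 g2 g3]] := WP m.
  apply: (@cover_uniq _ _ i ik1).
  - by rewrite size_takel ?s1 ?s2.
  - by rewrite /cover !EL_take.
  by rewrite /cover g1 g2.
pose r j := nth a0 (W j.+1) j.
have Wmk n : W n = mkseq r n.
  have [s1 _] := WP n.
  apply: (@eq_from_nth _ a0); first by rewrite size_mkseq.
  move=> j; rewrite s1 => jn; rewrite nth_mkseq // /r -(Wtake j.+1 n) //.
  by rewrite nth_take.
set a := sv i; set b := sv i.+1; set c := sv i.+2.
have Mmem n : [/\ a \in ELc (mkseq r n), b \in ELc (mkseq r n) & c \in ELc (mkseq r n)].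
  by rewrite -Wmk; case: (WP n).
have ia : idx a = i by rewrite idx_sv // ltnW.
have ib : idx b = i.+1 by rewrite idx_sv.
have ic : idx c = i.+2 by rewrite idx_sv.
have forced n e : L (b :: rcons (mkseq r n) e) -> e = r n.
  move=> he; apply/eqP; apply: contraT => ne.
  have [ha _ hc] := Mmem n.+1; rewrite mkseqS !inE in ha hc.
  case: HtR => _ [_ [_ tot]].
  case/orP: (tot e (r n)) => le.
    by have := pl_idx he ha ne le; rewrite ia ib ltnn.
  by have := pl_idx hc he _ le; rewrite eq_sym => /(_ ne); rewrite ib ic ltnn.
have fseq u : L (b :: u) -> u = mkseq r (size u).
  elim/last_ind: u => [//|u e IH] hu.
  have hu' : L (b :: u) by apply: (lok_fr HL (b := e)); rewrite rcons_cons.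
  have eu := IH hu'; rewrite eu in hu.
  by rewrite (forced _ _ hu) size_rcons mkseqS -eu.
have [N hN] := lok_ur HL b.
have LMN : L (mkseq r N).
  by have [_ hb _] := Mmem N; rewrite inE in hb; apply: (lok_fl HL hb).
have bin : b \in mkseq r N by apply: hN => //; rewrite size_mkseq.
set q0 := index b (mkseq r N).
have q0N : q0 < N by rewrite -(size_mkseq r N) index_mem.
have rq0 : r q0 = b by rewrite -(nth_mkseq a0 r q0N) nth_index.
set p := q0.+1.
have per m : r (p + m) = r m.
  have [_ hb _] := Mmem (p + m.+1); rewrite inE in hb.
  rewrite mkseqD /p mkseqS rq0 cat_rcons -cat_cons in hb.
  have := fseq _ (L_suffix hb); rewrite size_mkseq => /(congr1 (nth a0 ^~ m)).
  by rewrite !nth_mkseq.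
have [ha _ _] := Mmem p; rewrite inE in ha.
have [x [sx hx]] := ext_left N ha.
have bx : b \in x by apply: hN => //; [exact: L_prefix hx | rewrite sx].
case/splitPr: x / bx sx hx => x1 x2 _ hx.
rewrite -catA /= in hx.
have e := fseq _ (L_suffix hx).
have sz : size (x2 ++ a :: mkseq r p) = size x2 + p.+1.
  by rewrite size_cat /= size_map size_iota.
have e1 : nth a0 (x2 ++ a :: mkseq r p) (size x2) = r (size x2).
  by rewrite {1}e nth_mkseq // sz; lia.
have e2 : nth a0 (x2 ++ a :: mkseq r p) (size x2 + p) = r (size x2 + p).
  by rewrite {1}e nth_mkseq // sz; lia.
have e1' : nth a0 (x2 ++ a :: mkseq r p) (size x2) = a by rewrite nth_cat ltnn subnn.
have e2' : nth a0 (x2 ++ a :: mkseq r p) (size x2 + p) = b.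
  by rewrite nth_cat ltnNge leq_addr /= addKn /p /= nth_mkseq.
rewrite e1' in e1; rewrite e2' in e2.
have : a = b by rewrite e1 -(per (size x2)) addnC -e2.
by move/(congr1 idx); rewrite ia ib => /eqP; rewrite eqn_leq ltnn andbF.
Qed.


Lemma small_card : exists N, forall n w, N <= n -> size w = n -> #|ELc w| <= 2.
Proof.
case: eventually => // [[i [ik hq]]].
by case: (no_inf ik hq).
Qed.

Lemma pair_inj j1 j2 : j1.+1 < k -> j2.+1 < k ->
  [set sv j1; sv j1.+1] = [set sv j2; sv j2.+1] -> j1 = j2.
Proof.
move=> h1 h2 e.
have m1 : sv j1 \in [set sv j2; sv j2.+1] by rewrite -e !inE eqxx.
have m2 : sv j2 \in [set sv j1; sv j1.+1] by rewrite e !inE eqxx.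
rewrite !inE in m1 m2.
have i1 := idx_sv (ltnW h1); have i1' := idx_sv h1.
have i2 := idx_sv (ltnW h2); have i2' := idx_sv h2.
case/orP: m1 => /eqP /(congr1 idx); rewrite ?i1 ?i2 ?i2' => c1;
case/orP: m2 => /eqP /(congr1 idx); rewrite ?i1 ?i1' ?i2 => c2; lia.
Qed.

Lemma pair_of w : #|ELc w| <= 2 -> clique_edges (ELc w) != set0 ->
  exists j, j.+1 < k /\ ELc w = [set sv j; sv j.+1].
Proof.
move=> c2 /clique_ne0 [x [y [xS yS nxy]]].
have eS : ELc w = [set x; y].
  apply/eqP; rewrite eq_sym eqEcard cards2 nxy c2 andbT.
  by apply/subsetP => z; rewrite in_set2 => /orP [] /eqP ->.
wlog lt : x y xS yS nxy eS / idx x < idx y.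
  move=> H; have [l|l|l] := ltngtP (idx x) (idx y); first exact: (H x y).
    by apply: (H y x) => //; rewrite 1?eq_sym // setUC.
  by move: nxy; rewrite (idx_inj l) eqxx.
exists (idx x).
have ey : idx y = (idx x).+1.
  apply/eqP; rewrite eqn_leq lt andbT leqNgt; apply/negP => gt.
  have yk := idx_lt y.
  have hk : (idx x).+1 < k by apply: ltn_trans gt yk.
  have iv := idx_sv hk.
  have : sv (idx x).+1 \in ELc w.
    by apply: (intv_EL (x := x) (z := y)) => //; rewrite iv leqnSn; exact: ltnW.
  rewrite eS in_set2 => /orP [] /eqP /(congr1 idx); rewrite iv => h.
    by move: h; apply/eqP; rewrite neq_ltn ltnSn orbT.
  by move: gt; rewrite h ltnn.
split; first by rewrite -ey idx_lt.
by rewrite eS sv_idx -ey sv_idx.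
Qed.

Lemma sv_neq j : j.+1 < k -> sv j != sv j.+1.
Proof.
move=> h; apply/eqP => /(congr1 idx); rewrite (idx_sv h) (idx_sv (ltnW h)) => e.
by move: (ltnSn j); rewrite -{2}e ltnn.
Qed.

Lemma G_order_eq : G_order leL = [seq [set [set sv j; sv j.+1]] | j <- iota 0 k.-1].
Proof. by rewrite /G_order (zip_behead a0) -map_comp. Qed.

Lemma G_order_mem E : E \in G_order leL <-> exists j, j.+1 < k /\ E = [set [set sv j; sv j.+1]].
Proof.
rewrite G_order_eq; split => [/mapP [j] | [j [jk ->]]].
  by rewrite mem_iota add0n => /andP [_ jk] ->; exists j; split => //; lia.
by apply: map_f; rewrite mem_iota add0n; lia.
Qed.

Lemma G_order_uniq : uniq (G_order leL).
Proof.
rewrite G_order_eq map_inj_in_uniq ?iota_uniq //.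
move=> j1 j2; rewrite !mem_iota !add0n => h1 h2 /set1_inj.
by apply: pair_inj; lia.
Qed.

Lemma G_order_ne0 E : E \in G_order leL -> E != set0.
Proof.
by case/G_order_mem => j [_ ->]; apply/set0Pn; exists [set sv j; sv j.+1]; rewrite inE.
Qed.

Theorem core_props : exists N, forall n, N <= n ->
  (forall w1 w2, size w1 = n -> size w2 = n -> L w1 -> L w2 ->
     clique_edges (ELc w1) = clique_edges (ELc w2) -> clique_edges (ELc w1) != set0 -> w1 = w2) /\
  (forall E, E \in G_order leL <->
     exists w, [/\ size w = n, L w, E = clique_edges (ELc w) & E != set0]).
Proof.
have [N hN] := small_card.
exists N => n Nn; split.
  move=> w1 w2 s1 s2 L1 L2 e ne.
  have [j1 [h1 e1]] := pair_of (hN _ _ Nn s1) ne.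
  have ne2 : clique_edges (ELc w2) != set0 by rewrite -e.
  have [j2 [h2 e2]] := pair_of (hN _ _ Nn s2) ne2.
  have nj1 : sv j1 != sv j1.+1.
    exact: sv_neq.
  have nj2 : sv j2 != sv j2.+1.
    exact: sv_neq.
  move: e; rewrite e1 e2 !clique_pair // => /set1_inj /pair_inj.
  move=> /(_ h1 h2) ej; subst j2.
  apply: (cover_uniq h1); first by rewrite s1 s2.
    by rewrite /cover e1 !inE !eqxx ?orbT.
  by rewrite /cover e2 !inE !eqxx ?orbT.
move=> E; rewrite G_order_mem; split => [[j [jk ->]]|[w [sw Lw -> ne]]].
  have [w [sw cw]] := cover_ex n jk.
  have nj : sv j != sv j.+1.
    exact: sv_neq.
  have eS : ELc w = [set sv j; sv j.+1].
    apply/eqP; rewrite eq_sym eqEcard cards2 nj (hN _ _ Nn sw) andbT.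
    by case/andP: cw => c1 c2; apply/subsetP => z; rewrite in_set2 => /orP [] /eqP ->.
  exists w; split => //.
  - by case/andP: cw => /L_of_EL.
  - by rewrite eS clique_pair.
  by apply/set0Pn; exists [set sv j; sv j.+1]; rewrite inE.
have [j [jk eS]] := pair_of (hN _ _ Nn sw) ne.
exists j; split => //; rewrite eS clique_pair //.
exact: sv_neq.
Qed.

End Core.


Lemma final (A : finType) n (ts : seq (n.-tuple A)) (P : seq A -> bool)
  (f : seq A -> {set A}) (G : seq {set {set A}}) :
 uniq ts -> (forall t, (t \in ts) = P t) -> uniq G -> (forall E, E \in G -> E != set0) ->
 (forall w1 w2, size w1 = n -> size w2 = n -> P w1 -> P w2 ->
    clique_edges (f w1) = clique_edges (f w2) -> clique_edges (f w1) != set0 -> w1 = w2) ->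
 (forall E, E \in G <-> exists w, [/\ size w = n, P w, E = clique_edges (f w) & E != set0]) ->
 cmg_iso (multi_clique [seq f (val t) | t <- ts]) G.
Proof.
move=> ut mt uG nG inj memG.
rewrite /cmg_iso /multi_clique -map_comp.
have -> : [seq E <- G | E != set0] = G by apply/all_filterP/allP.
apply: uniq_perm => //.
  rewrite filter_map map_inj_in_uniq ?filter_uniq // => t1 t2.
  rewrite !mem_filter /= => /andP [n1 i1] /andP [n2 i2] e.
  apply: val_inj; apply: inj => //; rewrite ?size_tuple -?mt //.
move=> E; rewrite mem_filter; apply/andP/idP.
  move=> [ne /mapP [t it eE]]; apply/memG; exists (val t); split => //.
    by rewrite size_tuple.
  by rewrite -mt.
move=> /memG [w [sw Pw eE ne]]; split => //.
have wt : size w == n by apply/eqP.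
apply/mapP; exists (Tuple wt) => //.
by rewrite mt.
Qed.

Module Part4.
Import GRing.Theory Num.Theory.
Local Open Scope ring_scope.

Section Kon.
Variables (A : finType) (Y : nat -> int -> A).

Definition agree n (f g : int -> A) := forall m : int, (`|m| < n)%N -> f m = g m.
Definition Good n f := forall K, exists k, (K <= k)%N /\ agree n f (Y k).

Lemma good0 f : Good 0 f.
Proof. by move=> K; exists K; split => // m. Qed.

Definition upd n (p : A * A) (f : int -> A) : int -> A := fun m =>
  if m == (- n%:Z)%R then p.1 else if m == n%:Z then p.2 else f m.

Lemma good_ext n f : Good n f -> exists g, Good n.+1 g /\ agree n g f.
Proof.
move=> hg; apply: contrapT => hn.
have H : forall p : A * A, exists K, forall k, (K <= k)%N -> ~ agree n.+1 (upd n p f) (Y k).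
  move=> p; have ng : ~ Good n.+1 (upd n p f).
    move=> g1; apply: hn; exists (upd n p f); split => // m hm.
    rewrite /upd; case: eqP => [e|_]; first by move: hm; rewrite e; lia.
    by case: eqP => [e|_] //; move: hm; rewrite e; lia.
  move: ng; rewrite /Good -existsNP => [[K hK]]; exists K => k Kk ag.
  by apply: hK; exists k.
pose Kp p := proj1_sig (cid (H p)).
have [k [Kk ag]] := hg (\max_(p : A * A) Kp p).
pose p := (Y k (- n%:Z)%R, Y k n%:Z).
apply: (proj2_sig (cid (H p)) k).
  by apply: leq_trans _ Kk; apply: (leq_bigmax (F := Kp)).
move=> m hm; rewrite /upd.
case: eqP => [->//|n1]; case: eqP => [->//|n2].
by apply: ag; move/eqP: n1 => n1; move/eqP: n2 => n2; lia.
Qed.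

Variable f0 : int -> A.

Definition step n (f : {f | Good n f}) : {g | Good n.+1 g} :=
  let c := cid (good_ext (proj2_sig f)) in
  exist _ (proj1_sig c) (proj1 (proj2_sig c)).

Fixpoint fs n : {f | Good n f} :=
  if n is n'.+1 then step (fs n') else exist _ f0 (good0 f0).

Lemma fs_agree n : agree n (proj1_sig (fs n.+1)) (proj1_sig (fs n)).
Proof. by rewrite /=; exact: (proj2 (proj2_sig (cid (good_ext (proj2_sig (fs n)))))). Qed.

Lemma fs_coh n m (x : int) : (`|x| < n)%N -> (n <= m)%N ->
  proj1_sig (fs m) x = proj1_sig (fs n) x.
Proof.
move=> xn; elim: m => [|m IH]; first by rewrite leqn0 => /eqP ->.
rewrite leq_eqVlt => /orP [/eqP -> //|nm].
have nm' : (n <= m)%N by rewrite -ltnS.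
rewrite fs_agree; last by apply: leq_trans xn nm'.
exact: IH.
Qed.

Lemma compact_ex : exists z, forall n K, exists k, (K <= k)%N /\ agree n z (Y k).
Proof.
exists (fun x => proj1_sig (fs (`|x|.+1)) x) => n K.
have [k [Kk ag]] := proj2_sig (fs n) K.
exists k; split => // m hm.
by rewrite -(@fs_coh (`|m|.+1)%N n m) ?ltnSn //; apply: ag.
Qed.
End Kon.

Lemma compact (A : finType) (Y : nat -> int -> A) :
  exists z, forall n K, exists k, (K <= k)%N /\
    forall m : int, (`|m| < n)%N -> z m = Y k m.
Proof. exact: (compact_ex Y (Y 0%N)). Qed.

End Part4.
Import Part4.

Module Part5.
Import GRing.Theory Num.Theory.
Local Open Scope ring_scope.

Section Win.
Variable A : finType.
Implicit Types (X : (int -> A) -> Prop) (x : int -> A).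

Lemma size_window x i n : size (window x i n) = n.
Proof. by rewrite size_map size_iota. Qed.

Lemma window_cat x i m n : window x i (m + n) = window x i m ++ window x (i + m%:Z) n.
Proof.
rewrite /window iotaD map_cat; congr (_ ++ _).
rewrite add0n -[m in iota m _]addn0 iotaDl -map_comp; apply: eq_map => j /=.
by rewrite PoszD addrA.
Qed.

Lemma mem_window x i n (j : nat) : (j < n)%N -> x (i + j%:Z) \in window x i n.
Proof. by move=> jn; apply: (map_f (fun k : nat => x (i + k%:Z))); rewrite mem_iota. Qed.

Lemma inL_window X x i n : X x -> inL X (window x i n).
Proof. by move=> Xx; apply/asboolP; exists x; split => //; exists i; rewrite size_window. Qed.

Lemma inLP X w : inL X w -> exists x i, X x /\ w = window x i (size w).
Proof. by move/asboolP => [x [Xx [i e]]]; exists x, i. Qed.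

Lemma inL_cat X u v : inL X (u ++ v) -> inL X u /\ inL X v.
Proof.
move/inLP => [x [i [Xx e]]]; rewrite size_cat window_cat in e.
have eu : u = window x i (size u).
  by have := congr1 (take (size u)) e; rewrite !take_size_cat ?size_window.
have ev : v = window x (i + (size u)%:Z) (size v).
  by have := congr1 (drop (size u)) e; rewrite !drop_size_cat ?size_window.
by split; [rewrite eu | rewrite ev]; apply: inL_window.
Qed.

Lemma shift_nat X x (n : nat) : shift_invariant X -> X x ->
  X (fun m => x (m + n%:Z)) /\ X (fun m => x (m - n%:Z)).
Proof.
move=> si Xx; elim: n => [|n [IH1 IH2]].
  by split; apply: (eq_ind x X Xx); apply: funext => m /=; rewrite ?addr0 ?subr0.
split.
  have -> : (fun m => x (m + n.+1%:Z)) = shiftmap (fun m => x (m + n%:Z)).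
    by apply: funext => m; rewrite /shiftmap; congr x; lia.
  by apply: (proj1 (si _)).
apply: (proj2 (si _)); have -> : shiftmap (fun m => x (m - n.+1%:Z)) = (fun m => x (m - n%:Z)).
  by apply: funext => m; rewrite /shiftmap; congr x; lia.
by [].
Qed.

Lemma shift_int X x (c : int) : shift_invariant X -> X x -> X (fun m => x (m + c)).
Proof.
move=> si Xx; case: c => n; first exact: (shift_nat n si Xx).1.
have -> : (fun m => x (m + Negz n)) = (fun m => x (m - n.+1%:Z)).
  by apply: funext => m; rewrite NegzE.
exact: (shift_nat n.+1 si Xx).2.
Qed.

Lemma UR X b : minimal_shift X -> inL X [:: b] ->
  exists N, forall w, inL X w -> (N <= size w)%N -> b \in w.
Proof.
move=> [[[x0 X0] [cl si]] mn] hb; apply: contrapT => hN.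
have H : forall N : nat, exists y, X y /\ forall m : int, (`|m| <= N)%N -> y m != b.
  move=> N; move: hN; rewrite -forallNP => /(_ N.*2.+1).
  rewrite -existsNP => [[w hw]].
  have Lw : inL X w.
    by case/boolP: (inL X w) => // nL; exfalso; exact: (hw (fun h => False_ind _ (negP nL h))).
  have sw : (N.*2.+1 <= size w)%N.
    by case/boolP: (N.*2.+1 <= size w)%N => // nL; exfalso; exact: (hw (fun _ h => False_ind _ (negP nL h))).
  have bw : b \notin w by apply/negP => bw; exact: (hw (fun _ _ => bw)).
  have [x [i [Xx ew]]] := inLP Lw.
  exists (fun m => x (m + (i + N%:Z))); split; first exact: shift_int si Xx.
  move=> m hm; apply/eqP => e; move/negP: bw; apply; rewrite ew -e.
  have -> : m + (i + N%:Z) = i + (absz (m + N%:Z))%:Z by lia.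
  by apply: mem_window; lia.
pose Ys N := proj1_sig (cid (H N)).
have Yp N : X (Ys N) /\ forall m : int, (`|m| <= N)%N -> Ys N m != b.
  exact: (proj2_sig (cid (H N))).
have [z hz] := compact Ys.
have Xz : X z.
  apply: cl => n; have [k [_ ag]] := hz n.+1 0%N.
  exists (Ys k); split; first by case: (Yp k).
  by move=> i hi; apply: ag; lia.
have zb m : z m != b.
  have [k [kk ag]] := hz (absz m).+1 (absz m).
  by rewrite ag //; apply: (Yp k).2.
pose Y0 := fun x => X x /\ forall m, x m != b.
have sY : subshift Y0.
  split; first by exists z.
  split.
    move=> x hx; split.
      by apply: cl => n; have [y [[Xy _] ag]] := hx n; exists y.
    move=> m; have [y [[_ yb] ag]] := hx (absz m); rewrite ag ?yb //; lia.
  move=> x; split => [[Xx xb]|[Xx xb]].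
    by split; [apply: (proj1 (si _)) | move=> m; apply: xb].
  split; first by apply: (proj2 (si _)).
  by move=> m; have := xb (m - 1); rewrite /shiftmap subrK.
have := mn Y0 sY (fun x hx => proj1 hx).
have [x [i [Xx ew]]] := inLP hb.
move=> /(_ x Xx) [_ /(_ (i + 0%:Z))].
by move: ew; rewrite /window /= => [[->]]; rewrite eqxx.
Qed.

Lemma connect_inv (T : finType) (e : rel T) (p : T -> bool) :
  (forall u v, e u v -> p u = p v) -> forall u v, connect e u v -> p u = p v.
Proof.
move=> H u v /connectP [q hq ->]; elim: q u hq => //= y q IH u /andP [euy hq].
by rewrite (H _ _ euy); apply: IH.
Qed.
End Win.

End Part5.
Import Part5.

Import GRing.Theory Num.Theory.

Lemma LOK_X (A : finType) (X : (int -> A) -> Prop) leL leR :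
  minimal_shift X -> (forall a, inL X [:: a]) -> dendric X -> planar X leL leR ->
  LOK (inL X) leL leR.
Proof.
move=> mn hl dd pl.
have fl a w : inL X (a :: w) -> inL X w by move=> h; exact: (inL_cat (u := [:: a]) h).2.
have fr w b : inL X (rcons w b) -> inL X w by rewrite -cats1 => /inL_cat [].
split => //.
- move=> w /inLP [x [i [Xx ew]]]; exists (x (i - 1)%R).
  have -> : x (i - 1)%R :: w = window x (i - 1)%R (1 + size w).
    rewrite window_cat /window /= GRing.addr0 GRing.subrK.
    by rewrite -/(window x i (size w)) -ew.
  exact: inL_window.
- move=> w /inLP [x [i [Xx ew]]]; exists (x (i + (size w)%:Z)%R).
  have -> : rcons w (x (i + (size w)%:Z)%R) = window x i (size w + 1).
    by rewrite window_cat -ew /window /= GRing.addr0 cats1.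
  exact: inL_window.
- move=> w Lw p hp.
  have [_ [cn _]] := dd w Lw.
  have pinv : forall u v, ext_edge X w u v -> p u = p v.
    case=> [a|b] [a'|b'] //=; rewrite inE /= => h; first exact: hp.
    by symmetry; apply: hp.
  split => [a a' h h'|b b' h h']; apply: (connect_inv pinv); apply: cn;
    rewrite in_setU; apply/orP; (left + right); apply: imset_f; rewrite inE //.
- move=> w a1 b1 a2 b2 h1 h2 n l.
  have Lw : inL X w by apply: (fr _ b1); apply: (fl a1).
  by apply: (pl w Lw a1 b1 a2 b2); rewrite ?inE ?n ?l.
- by move=> b; apply: UR.
Qed.

Lemma LOK_rev (A : finType) (L : seq A -> bool) leL leR :
  total_order leL -> total_order leR -> LOK L leL leR ->
  LOK (fun w => L (rev w)) leR leL.
Proof.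
move=> [rfL [anL [trL totL]]] [rfR [anR [trR totR]]] HL.
split.
- by move=> a w; rewrite rev_cons => /(lok_fr HL).
- by move=> w b; rewrite rev_rcons => /(lok_fl HL).
- by move=> w /(lok_er HL) [a h]; exists a; rewrite rev_cons.
- by move=> w /(lok_el HL) [a h]; exists a; rewrite rev_rcons.
- by move=> a; apply: (lok_let HL).
- move=> w Lw p hp.
  pose q (u : A + A) := match u with inl x => p (inr x) | inr y => p (inl y) end.
  have hq : forall x y, L (x :: rcons (rev w) y) -> q (inl x) = q (inr y).
    move=> x y h /=; symmetry; apply: hp.
    by rewrite rev_cons rev_rcons.
  have [h1 h2] := lok_conn HL Lw hq.
  split.
    move=> a a'; rewrite !rev_cons => ha ha'; exact: (h2 a a' ha ha').
  move=> b b'; rewrite !rev_rcons => hb hb'; exact: (h1 b b' hb hb').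
- move=> w a1 b1 a2 b2; rewrite !rev_cons !rev_rcons => h1 h2 n l.
  case/orP: (totL b1 b2) => // l21.
  have [e|nb] := eqVneq b2 b1; first by rewrite e rfL.
  have := lok_pl HL h2 h1 nb l21 => l2.
  by move/negP: n; case; apply/eqP; apply: anR; rewrite l l2.
- move=> b; have [N hN] := lok_ur HL b; exists N => w h s.
  by rewrite -mem_rev; apply: hN; rewrite ?size_rev.
Qed.

Theorem mainTheorem20 (A : finType) (X : (int -> A) -> Prop)
    (leL leR : rel A) :
  minimal_shift X ->
  (forall a : A, inL X [:: a]) ->
  dendric X ->
  total_order leL -> total_order leR ->
  planar X leL leR ->
  (exists N, forall n, N <= n -> cmg_iso (GLn X n) (G_order leL)) /\
  (exists N, forall n, N <= n -> cmg_iso (GRn X n) (G_order leR)).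
Proof.
move=> mn hl dd tL tR pl.
have HL := LOK_X mn hl dd pl.
have [[[x0 _] _] _] := mn.
pose a0 := x0 0%R.
split.
  have [N hN] := core_props a0 HL tL tR.
  exists N => n Nn; have [h1 h2] := hN n Nn.
  apply: (final (P := inL X)).
  - exact: enum_uniq.
  - by move=> t; rewrite mem_enum.
  - exact: G_order_uniq a0 leL.
  - by move=> E; apply: G_order_ne0.
  - exact: h1.
  - exact: h2.
have HL' := LOK_rev tL tR HL.
have [N hN] := core_props a0 HL' tR tL.
have eER : forall w, ELc (fun w => inL X (rev w)) (rev w) = ER X w.
  by move=> w; apply/setP => a; rewrite !inE rev_cons revK.
exists N => n Nn; have [h1 h2] := hN n Nn.
apply: (final (P := inL X)).
- exact: enum_uniq.
- by move=> t; rewrite mem_enum.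
- exact: G_order_uniq a0 leR.
- by move=> E; apply: G_order_ne0.
- move=> w1 w2 s1 s2 L1 L2 e ne.
  have e' : rev w1 = rev w2 by apply: h1; rewrite ?size_rev ?revK ?eER.
  by rewrite -[w1]revK e' revK.
move=> E; rewrite h2; split => [[w [sw Lw eE ne]]|[w [sw Lw eE ne]]].
  by exists (rev w); rewrite size_rev -eER revK.
by exists (rev w); rewrite size_rev revK eER.
Qed.
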